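(* Let $G$ be a group of order $n\ge 2$, let $g\in G$ be a non-identity element, and let $m\ge 3$ be an odd integer. Let $\Gamma$ be the digraph with vertex set $G\times G\times\mathbb{Z}_m$ in which $(x,y,i)\to(u,v,j)$ if and only if at least one of the following holds: (1) $x=u$, $i=j$ and $y\neq v$; (2) $y=v$, $i=j$ and $x\neq u$; (3) $u=xy$ and $j\in\{i+1,\dots,i+\tfrac{m-1}{2}\}$ (indices mod $m$); (4) $v=xy$ and $j\in\{i-\tfrac{m-1}{2},\dots,i-1\}$ (indices mod $m$); (5) $u=xyg$ and $j\in\{i+1,\dots,i+\tfrac{m-1}{2}\}$ (indices mod $m$); (6) $v=xyg$ and $j\in\{i-\tfrac{m-1}{2},\dots,i-1\}$ (indices mod $m$). Then $\Gamma$ is a directed strongly regular graph with parameters $(v,k,t,\lambda,\mu)=(mn^2,\ 2mn-2,\ 2n+4m-6,\ n+4m-6,\ 4m-2)$.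
   Context: A digraph here has no loops and no multiple arcs; its adjacency matrix $A$ has $A_{xy}=1$ iff $x\to y$. A directed strongly regular graph with parameters $(v,k,t,\lambda,\mu)$ is a digraph on $v$ vertices whose adjacency matrix $A$ satisfies $A^2=tI+\lambda A+\mu(J-I-A)$ and $AJ=JA=kJ$, where $I$ is the identity and $J$ the all-ones matrix. (The paper phrases the hypothesis on $g$ as ''non-identity, non-idempotent'', which in a group is the same as $g\ne$ identity.) *)

(* Defs.v *)
From HB Require Import structures.
From mathcomp Require Import all_boot all_order all_algebra all_fingroup.
Set Implicit Arguments. Unset Strict Implicit. Unset Printing Implicit Defensive.
Import GRing.Theory.

Section Mx.
Local Open Scope ring_scope.

Definition adjmx (T : finType) (e : rel T) : 'M[int]_#|T| :=
  \matrix_(i, j) ((e (enum_val i) (enum_val j))%:R : int).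

Definition Jmx (n : nat) : 'M[int]_n := const_mx 1.

(* A digraph (no loops; no multiple arcs, automatic for a relation) on T is a
   directed strongly regular graph with parameters (v,k,t,lambda,mu):
   A^2 = tI + lambda A + mu (J - I - A), AJ = JA = kJ, |V| = v. *)
Definition is_dsrg (T : finType) (e : rel T) (v k t lam mu : nat) : Prop :=
  let A := adjmx e in
  let J := Jmx #|T| in
  [/\ irreflexive e,
      #|T| = v,
      A *m J = k%:R *: J,
      J *m A = k%:R *: J &
      A *m A = (t%:R : int)%:M + lam%:R *: A + mu%:R *: (J - 1%:M - A)].
End Mx.

Definition fwd (m : nat) (i j : 'I_m) : bool :=
  [exists d : 'I_m, (1 <= d <= (m - 1) %/ 2) && (val j == (val i + d) %% m)].

Definition Gamma (G : finGroupType) (g : G) (m : nat) : rel (G * G * 'I_m) :=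
  fun a b =>
    let: (x, y, i) := a in
    let: (u, v, j) := b in
    [|| [&& x == u, i == j & y != v],
        [&& y == v, i == j & x != u],
        (u == (x * y)%g) && fwd i j,
        (v == (x * y)%g) && fwd j i,
        (u == (x * y * g)%g) && fwd i j
      | (v == (x * y * g)%g) && fwd j i].
Arguments Gamma {G} g m _ _.

(* Main.v *)
Require Import Defs.
From mathcomp Require Import all_boot all_order all_algebra all_fingroup.
From mathcomp Require Import zify ring lra.
Import GRing.Theory.
Set Implicit Arguments. Unset Strict Implicit.

Lemma mod2m x m : x < 2 * m -> x %% m = if x < m then x else x - m.
Proof.
case: ifP => H1 H2; first by rewrite modn_small.
have -> : x = (x - m) + m by lia.
by rewrite modnDr modn_small; lia.
Qed.

Section Layers.
Variable m : nat.
Hypothesis m3 : 3 <= m.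
Hypothesis modd : odd m.

Definition dd (i j : 'I_m) : nat := if i <= j then j - i else j + m - i.

Lemma fwdE (i j : 'I_m) : fwd i j = (0 < dd i j <= (m - 1) %/ 2).
Proof.
have Hi := ltn_ord i; have Hj := ltn_ord j.
apply/existsP/idP.
- case=> d /andP[/andP[d1 d2] /eqP Ej].
  have Hd := ltn_ord d.
  rewrite -[val j]/(nat_of_ord j) -[val i]/(nat_of_ord i) in Ej.
  rewrite mod2m in Ej; last by lia.
  rewrite /dd; move: Ej; case: (ltnP (i + d) m) => H Ej;
  case: (leqP i j) => H'; lia.
- move=> H.
  have Hdm : dd i j < m by rewrite /dd; case: ifP; lia.
  exists (Ordinal Hdm) => /=; rewrite H /=.
  rewrite -[val j]/(nat_of_ord j) -[val i]/(nat_of_ord i).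
  rewrite mod2m; last by rewrite /dd; case: ifP; lia.
  apply/eqP; rewrite /dd; case: (leqP i j) => H1; case: ifP => H2; lia.
Qed.

Lemma oddm : (m - 1) %/ 2 * 2 + 1 = m.
Proof. have : m %% 2 = 1 by rewrite modn2 modd. lia. Qed.

Lemma fwd_irr (i : 'I_m) : fwd i i = false.
Proof. rewrite fwdE /dd leqnn subnn; lia. Qed.

Lemma fwd_anti (i j : 'I_m) : fwd i j -> fwd j i = false.
Proof.
have := oddm; have Hi := ltn_ord i; have Hj := ltn_ord j.
rewrite !fwdE /dd; case: ifP; case: ifP; lia.
Qed.

Lemma fwd_tot (i j : 'I_m) : i != j -> fwd i j || fwd j i.
Proof.
have := oddm; have Hi := ltn_ord i; have Hj := ltn_ord j.
move=> Ho ne; have : (i : nat) != j by [].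
rewrite !fwdE /dd; case: ifP; case: ifP; lia.
Qed.
End Layers.
Local Open Scope ring_scope.

Definition ind (b : bool) : int := (b : nat)%:R.
Lemma ind0 : ind false = 0. Proof. by []. Qed.
Lemma ind1 : ind true = 1. Proof. by []. Qed.

Section Sums.
Variables I J : finType.

Lemma sum_lc (c : I) (F : I -> int) : \sum_i ind (c == i) * F i = F c.
Proof.
rewrite (bigD1 c) //= eqxx ind1 mul1r big1 ?addr0 // => i.
by rewrite eq_sym => /negbTE ->; rewrite ind0 mul0r.
Qed.
Lemma sum_lr (c : I) (F : I -> int) : \sum_i ind (i == c) * F i = F c.
Proof. by rewrite -(sum_lc c); apply: eq_bigr => i _; rewrite eq_sym. Qed.
Lemma sum_rr (c : I) (F : I -> int) : \sum_i F i * ind (i == c) = F c.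
Proof. by rewrite -(sum_lr c); apply: eq_bigr => i _; rewrite mulrC. Qed.
Lemma sum_rc (c : I) (F : I -> int) : \sum_i F i * ind (c == i) = F c.
Proof. by rewrite -(sum_lc c); apply: eq_bigr => i _; rewrite mulrC. Qed.
Lemma sum_ind (c : I) : \sum_i ind (i == c) = 1.
Proof. by rewrite -(sum_lr c (fun=> 1)); apply: eq_bigr => i _; rewrite mulr1. Qed.
Lemma sum_cst (c : int) : \sum_(i : I) c = #|I|%:R * c.
Proof. by rewrite sumr_const mulr_natl. Qed.

Lemma eq_sum2 (F H : I -> J -> int) : (forall i j, F i j = H i j) ->
  \sum_i \sum_j F i j = \sum_i \sum_j H i j.
Proof. by move=> E; apply: eq_bigr => i _; apply: eq_bigr => j _. Qed.
Lemma sum2D (F H : I -> J -> int) :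
  \sum_i \sum_j (F i j + H i j) = \sum_i \sum_j F i j + \sum_i \sum_j H i j.
Proof. by rewrite -big_split; apply: eq_bigr => i _; rewrite big_split. Qed.
Lemma sum2B (F H : I -> J -> int) :
  \sum_i \sum_j (F i j - H i j) = \sum_i \sum_j F i j - \sum_i \sum_j H i j.
Proof. by rewrite -sumrB; apply: eq_bigr => i _; rewrite sumrB. Qed.
Lemma sum2N (F : I -> J -> int) :
  \sum_i \sum_j (- F i j) = - \sum_i \sum_j F i j.
Proof. by rewrite -sumrN; apply: eq_bigr => i _; rewrite sumrN. Qed.
Lemma sum2Z (c : int) (F : I -> J -> int) :
  \sum_i \sum_j (c * F i j) = c * \sum_i \sum_j F i j.
Proof. by rewrite mulr_sumr; apply: eq_bigr => i _; rewrite mulr_sumr. Qed.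
Lemma sum2_lc (c : I) (F : I -> J -> int) :
  \sum_i \sum_j (ind (c == i) * F i j) = \sum_j F c j.
Proof. by rewrite -(sum_lc c (fun i => \sum_j F i j)); apply: eq_bigr => i _; rewrite mulr_sumr. Qed.
Lemma sum2_lr (c : I) (F : I -> J -> int) :
  \sum_i \sum_j (ind (i == c) * F i j) = \sum_j F c j.
Proof. by rewrite -(sum_lr c (fun i => \sum_j F i j)); apply: eq_bigr => i _; rewrite mulr_sumr. Qed.
End Sums.
Section Sums2.
Variables I J : finType.
Lemma sum2_ic (c : J) (F : I -> J -> int) :
  \sum_i \sum_j (ind (c == j) * F i j) = \sum_i F i c.
Proof. by apply: eq_bigr => i _; rewrite (sum_lc c (F i)). Qed.
Lemma sum2_ir (c : J) (F : I -> J -> int) :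
  \sum_i \sum_j (ind (j == c) * F i j) = \sum_i F i c.
Proof. by apply: eq_bigr => i _; rewrite (sum_lr c (F i)). Qed.
End Sums2.

Section Grp.
Variables (G : finGroupType) (g : G).
Hypothesis g1 : g != 1%g.

Definition Rr (x y p q : G) : int :=
  ind (x == p) + ind (y == q) - 2 * (ind (x == p) * ind (y == q)).
Definition Sr (w t : G) : int := ind (t == w) + ind (t == (w * g)%g).

Lemma neq_wg (w : G) : (w == (w * g)%g) = false.
Proof.
apply/negbTE; apply: contra g1 => /eqP E.
by rewrite -(mulKg w g) -E mulVg.
Qed.

Lemma sum_S (w : G) : \sum_p Sr w p = 2.
Proof. by rewrite big_split /= !sum_ind. Qed.

Lemma sum_sol (F : G -> G) (c d : G) : (forall q, (c == F q) = (q == d)) ->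
  \sum_q ind (c == F q) = 1.
Proof. by move=> E; rewrite -(sum_ind d); apply: eq_bigr => q _; rewrite E. Qed.

Lemma sum_Sq (p u : G) : \sum_q Sr (p * q)%g u = 2.
Proof.
rewrite big_split /= (@sum_sol (fun q => p * q)%g u (p^-1 * u)%g).
  rewrite (@sum_sol (fun q => p * q * g)%g u (p^-1 * u * g^-1)%g) //.
  move=> q; apply/eqP/eqP => [->|->].
    by rewrite !mulgA mulVg mul1g mulgK.
  by rewrite !mulgA mulgV mul1g mulgKV.
move=> q; apply/eqP/eqP => [->|->]; first by rewrite mulKg.
by rewrite mulKVg.
Qed.

Lemma sum_Sp (q u : G) : \sum_p Sr (p * q)%g u = 2.
Proof.
rewrite big_split /= (@sum_sol (fun p => p * q)%g u (u * q^-1)%g).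
  rewrite (@sum_sol (fun p => p * q * g)%g u (u * g^-1 * q^-1)%g) //.
  move=> p; apply/eqP/eqP => [->|->]; first by rewrite mulgK mulgK.
  by rewrite mulgKV mulgKV.
move=> p; apply/eqP/eqP => [->|->]; first by rewrite mulgK.
by rewrite mulgKV.
Qed.

Notation n := (#|G|%:R : int).

Lemma GS_RS (x y t : G) :
  \sum_p \sum_q (Rr x y p q * Sr (p * q)%g t) = 4 - 2 * Sr (x * y)%g t.
Proof.
rewrite (@eq_sum2 _ _ _ (fun p q => ind (x == p) * Sr (p * q)%g t
   + ind (y == q) * Sr (p * q)%g t
   - 2 * (ind (x == p) * (ind (y == q) * Sr (p * q)%g t)))); last first.
  by move=> p q; rewrite /Rr; ring.
rewrite sum2B sum2D sum2Z !sum2_lc sum2_ic sum_lc sum_Sq sum_Sp.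
ring.
Qed.

Lemma GS_SpR (w u v : G) :
  \sum_p \sum_q (Sr w p * Rr p q u v) = (n - 2) * Sr w u + 2.
Proof.
rewrite (@eq_sum2 _ _ _ (fun p q => ind (p == u) * Sr w p
   + ind (q == v) * Sr w p
   - 2 * (ind (p == u) * (ind (q == v) * Sr w p)))); last first.
  by move=> p q; rewrite /Rr; ring.
rewrite sum2B sum2D sum2Z !sum2_lr sum2_ir sum_lr sum_cst sum_S.
ring.
Qed.

Lemma GS_SqR (w u v : G) :
  \sum_p \sum_q (Sr w q * Rr p q u v) = (n - 2) * Sr w v + 2.
Proof.
rewrite (@eq_sum2 _ _ _ (fun p q => ind (p == u) * Sr w q
   + ind (q == v) * Sr w q
   - 2 * (ind (p == u) * (ind (q == v) * Sr w q)))); last first.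
  by move=> p q; rewrite /Rr; ring.
rewrite sum2B sum2D sum2Z !sum2_lr sum2_ir sum_lr sum_cst sum_S.
ring.
Qed.

Lemma GS_SpS (w t : G) :
  \sum_p \sum_q (Sr w p * Sr (p * q)%g t) = 4.
Proof.
rewrite (eq_bigr (fun p => Sr w p * 2)); last first.
  by move=> p _; rewrite -mulr_sumr sum_Sq.
by rewrite -mulr_suml sum_S.
Qed.

Lemma GS_SqS (w t : G) :
  \sum_p \sum_q (Sr w q * Sr (p * q)%g t) = 4.
Proof.
rewrite exchange_big /= (eq_bigr (fun q => Sr w q * 2)); last first.
  by move=> q _; rewrite -mulr_sumr sum_Sp.
by rewrite -mulr_suml sum_S.
Qed.

Lemma GS_RR (x y u v : G) :
  \sum_p \sum_q (Rr x y p q * Rr p q u v) =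
  n * ind (x == u) + 2 + n * ind (y == v) - 4 * ind (x == u) - 4 * ind (y == v)
  + 4 * (ind (x == u) * ind (y == v)).
Proof.
rewrite (@eq_sum2 _ _ _ (fun p q =>
     ind (x == p) * (ind (p == u))
   + ind (x == p) * (ind (q == v))
   + ind (y == q) * (ind (p == u))
   + ind (y == q) * (ind (q == v))
   - 2 * (ind (x == p) * (ind (p == u) * ind (q == v)))
   - 2 * (ind (y == q) * (ind (p == u) * ind (q == v)))
   - 2 * (ind (x == p) * (ind (y == q) * ind (p == u)))
   - 2 * (ind (x == p) * (ind (y == q) * ind (q == v)))
   + 4 * (ind (x == p) * (ind (y == q) * (ind (p == u) * ind (q == v)))))); last first.
  by move=> p q; rewrite /Rr; ring.
rewrite !sum2D !sum2N !sum2Z !sum2_lc !sum2_ic.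
rewrite !sum_lr !sum_cst !sum_ind !sum_rr !sum_lc.
ring.
Qed.
End Grp.

Section Gen.
Local Open Scope ring_scope.
Variables L P Q : finType.

Lemma sum3 (a1 a2 a3 : L -> int) (F1 F2 F3 : P -> Q -> int) :
  \sum_l \sum_p \sum_q (a1 l * F1 p q + a2 l * F2 p q + a3 l * F3 p q) =
  (\sum_l a1 l) * (\sum_p \sum_q F1 p q) + (\sum_l a2 l) * (\sum_p \sum_q F2 p q)
  + (\sum_l a3 l) * (\sum_p \sum_q F3 p q).
Proof.
under eq_bigr => l _ do rewrite !sum2D !sum2Z.
by rewrite !big_split /= -!mulr_suml.
Qed.

Lemma sum9 (a1 a2 a3 b1 b2 b3 : L -> int) (F1 F2 F3 H1 H2 H3 : P -> Q -> int) :
  \sum_l \sum_p \sum_q ((a1 l * F1 p q + a2 l * F2 p q + a3 l * F3 p q) *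
                        (b1 l * H1 p q + b2 l * H2 p q + b3 l * H3 p q)) =
  (\sum_l a1 l * b1 l) * (\sum_p \sum_q F1 p q * H1 p q) +
  (\sum_l a1 l * b2 l) * (\sum_p \sum_q F1 p q * H2 p q) +
  (\sum_l a1 l * b3 l) * (\sum_p \sum_q F1 p q * H3 p q) +
  (\sum_l a2 l * b1 l) * (\sum_p \sum_q F2 p q * H1 p q) +
  (\sum_l a2 l * b2 l) * (\sum_p \sum_q F2 p q * H2 p q) +
  (\sum_l a2 l * b3 l) * (\sum_p \sum_q F2 p q * H3 p q) +
  (\sum_l a3 l * b1 l) * (\sum_p \sum_q F3 p q * H1 p q) +
  (\sum_l a3 l * b2 l) * (\sum_p \sum_q F3 p q * H2 p q) +
  (\sum_l a3 l * b3 l) * (\sum_p \sum_q F3 p q * H3 p q).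
Proof.
have E : forall l p q, (a1 l * F1 p q + a2 l * F2 p q + a3 l * F3 p q) *
                        (b1 l * H1 p q + b2 l * H2 p q + b3 l * H3 p q) =
  (a1 l * b1 l) * (F1 p q * H1 p q) + (a1 l * b2 l) * (F1 p q * H2 p q) +
  (a1 l * b3 l) * (F1 p q * H3 p q) + (a2 l * b1 l) * (F2 p q * H1 p q) +
  (a2 l * b2 l) * (F2 p q * H2 p q) + (a2 l * b3 l) * (F2 p q * H3 p q) +
  (a3 l * b1 l) * (F3 p q * H1 p q) + (a3 l * b2 l) * (F3 p q * H2 p q) +
  (a3 l * b3 l) * (F3 p q * H3 p q) by move=> *; ring.
under eq_bigr => l _ do rewrite (eq_sum2 (E l)) !sum2D !sum2Z.
by rewrite !big_split /= -!mulr_suml.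
Qed.
End Gen.

Section Main.
Local Open Scope ring_scope.
Variables (G : finGroupType) (g : G) (m : nat).
Hypotheses (g1 : g != 1%g) (m3 : (3 <= m)%N) (modd : odd m) (n2 : (2 <= #|G|)%N).

Lemma Gdec (x y p q : G) (i l : 'I_m) :
  ind (Gamma g m (x, y, i) (p, q, l)) =
  ind (i == l) * Rr x y p q + ind (fwd i l) * Sr g (x * y)%g p
  + ind (fwd l i) * Sr g (x * y)%g q.
Proof.
rewrite /Gamma /=; case: (eqVneq i l) => [<-|ne].
  rewrite (fwd_irr m3 modd) /= !andbF !orbF ind0 !mul0r !addr0 mul1r /Rr.
  by case: (x == p); case: (y == q).
rewrite ind0 mul0r add0r /=.
case: (boolP (fwd i l)) => F.
  rewrite (fwd_anti m3 modd F) !andbT !andbF /= !orbF ind0 mul0r addr0 mul1r /Sr.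
  case: (eqVneq p (x * y)%g) => [->|np]; first by rewrite (neq_wg g1).
by rewrite /= add0r.
have F' : fwd l i by have := fwd_tot m3 modd ne; rewrite (negbTE F).
rewrite F' ?andbT ?andbF /= ?orbF ind0 mul0r add0r ind1 mul1r /Sr.
case: (eqVneq q (x * y)%g) => [->|nq]; first by rewrite (neq_wg g1).
by rewrite /= add0r.
Qed.

Lemma fsum (i l : 'I_m) : ind (fwd i l) + ind (fwd l i) = 1 - ind (l == i).
Proof.
case: (eqVneq l i) => [->|ne]; first by rewrite (fwd_irr m3 modd).
have ne' : i != l by rewrite eq_sym.
have := fwd_tot m3 modd ne'.
case: (boolP (fwd i l)) => F; first by rewrite (fwd_anti m3 modd F).
by move=> /= ->.
Qed.

Lemma L4 (i j : 'I_m) :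
  (\sum_l ind (fwd i l) * ind (fwd l j)) + (\sum_l ind (fwd i l) * ind (fwd j l))
  + (\sum_l ind (fwd l i) * ind (fwd l j)) + (\sum_l ind (fwd l i) * ind (fwd j l))
  = m%:R - 2 + ind (i == j).
Proof.
rewrite -!big_split /=.
rewrite (eq_bigr (fun l => 1 - ind (l == i) - ind (l == j) + ind (l == i) * ind (l == j))); last first.
  move=> l _.
  have -> : forall a b c d : int, a * c + a * d + b * c + b * d = (a + b) * (c + d).
    by move=> *; ring.
  rewrite fsum (addrC (ind (fwd l j))) fsum; ring.
rewrite !big_split /= !sumrN !sum_ind sum_lr sum_cst card_ord mulr1.
by rewrite eq_sym; ring.
Qed.

Lemma sumfwd (i : 'I_m) :
  (\sum_l ind (fwd i l)) + (\sum_l ind (fwd l i)) = m%:R - 1.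
Proof.
rewrite -big_split /= (eq_bigr (fun l => 1 - ind (l == i))); last by move=> l _; rewrite fsum.
by rewrite sumrB sum_ind sum_cst card_ord mulr1.
Qed.


Lemma sumT (F : G -> G -> 'I_m -> int) :
  \sum_(c : G * G * 'I_m) F c.1.1 c.1.2 c.2 = \sum_l \sum_p \sum_q F p q l.
Proof.
rewrite -(pair_bigA _ (fun pq l => F pq.1 pq.2 l)) /= exchange_big /=.
apply: eq_bigr => l _.
by rewrite -(pair_bigA _ (fun p q => F p q l)).
Qed.

Lemma count2 (x y u v : G) (i j : 'I_m) :
  \sum_(c : G * G * 'I_m) ind (Gamma g m (x, y, i) c) * ind (Gamma g m c (u, v, j)) =
  (2 * #|G| + 4 * m - 6)%N%:R * ind ((x, y, i) == (u, v, j))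
  + (#|G| + 4 * m - 6)%N%:R * ind (Gamma g m (x, y, i) (u, v, j))
  + (4 * m - 2)%N%:R * (1 - ind ((x, y, i) == (u, v, j))
                          - ind (Gamma g m (x, y, i) (u, v, j))).
Proof.
rewrite (eq_bigr (fun c => (fun p q l => ind (Gamma g m (x, y, i) (p, q, l)) *
   ind (Gamma g m (p, q, l) (u, v, j))) c.1.1 c.1.2 c.2)); last by move=> [[p q] l].
rewrite (sumT (fun p q l => ind (Gamma g m (x, y, i) (p, q, l)) *
   ind (Gamma g m (p, q, l) (u, v, j)))).
under eq_bigr => l _ do under eq_bigr => p _ do under eq_bigr => q _ do rewrite !Gdec.
rewrite sum9 GS_RR !GS_RS GS_SpR GS_SqR !GS_SpS !GS_SqS !sum_lc !sum_rr.
move: (L4 i j); rewrite Gdec !xpair_eqE.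
case: (eqVneq i j) => [<-|nij].
  rewrite (fwd_irr m3 modd) ?eqxx /Rr.
  by case: (x == u); case: (y == v); rewrite ?ind0 ?ind1 /=; lia.
case: (boolP (fwd i j)) => F.
  rewrite (fwd_anti m3 modd F) /Sr.
  case: (eqVneq u (x * y)%g) => [->|nu]; first rewrite (neq_wg g1) ?eqxx.
    by rewrite ?andbF ?ind0 ?ind1 /=; lia.
  by case: (u == (x * y * g)%g); rewrite ?andbF ?ind0 ?ind1 /=; lia.
have F' : fwd j i by have := fwd_tot m3 modd nij; rewrite (negbTE F).
rewrite F' /Sr.
case: (eqVneq v (x * y)%g) => [->|nv]; first rewrite (neq_wg g1) ?eqxx.
  by rewrite ?andbF ?ind0 ?ind1 /=; lia.
by case: (v == (x * y * g)%g); rewrite ?andbF ?ind0 ?ind1 /=; lia.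
Qed.


Lemma sum_indc (c : 'I_m) : \sum_l ind (c == l) = 1.
Proof. by rewrite -(sum_ind c); apply: eq_bigr => l _; rewrite eq_sym. Qed.

Lemma GS_R1 (x y : G) : \sum_p \sum_q Rr x y p q = 2 * #|G|%:R - 2.
Proof.
rewrite (@eq_sum2 _ _ _ (fun p q => ind (x == p) * 1 + ind (y == q) * 1
   - 2 * (ind (x == p) * (ind (y == q) * 1)))); last first.
  by move=> p q; rewrite /Rr; ring.
rewrite sum2B sum2D sum2Z !sum2_lc sum2_ic sum_lc !sum_cst; ring.
Qed.

Lemma GS_R2 (u v : G) : \sum_p \sum_q Rr p q u v = 2 * #|G|%:R - 2.
Proof.
rewrite (@eq_sum2 _ _ _ (fun p q => ind (p == u) * 1 + ind (q == v) * 1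
   - 2 * (ind (p == u) * (ind (q == v) * 1)))); last first.
  by move=> p q; rewrite /Rr; ring.
rewrite sum2B sum2D sum2Z !sum2_lr sum2_ir sum_lr !sum_cst; ring.
Qed.

Lemma GS_Sp1 (w : G) : \sum_p \sum_(q : G) Sr g w p = #|G|%:R * 2.
Proof.
under eq_bigr => p _ do rewrite sum_cst.
by rewrite -mulr_sumr sum_S.
Qed.

Lemma GS_Sq1 (w : G) : \sum_(p : G) \sum_q Sr g w q = 2 * #|G|%:R.
Proof.
under eq_bigr => p _ do rewrite sum_S.
by rewrite sum_cst mulrC.
Qed.

Lemma GS_Spq (t : G) : \sum_p \sum_q Sr g (p * q)%g t = 2 * #|G|%:R.
Proof.
under eq_bigr => p _ do rewrite sum_Sq.
by rewrite sum_cst mulrC.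
Qed.

Lemma rowsum (a : G * G * 'I_m) :
  \sum_c ind (Gamma g m a c) = (2 * m * #|G| - 2)%N%:R.
Proof.
case: a => [[x y] i].
rewrite (eq_bigr (fun c => (fun p q l => ind (Gamma g m (x, y, i) (p, q, l)))
   c.1.1 c.1.2 c.2)); last by move=> [[p q] l].
rewrite (sumT (fun p q l => ind (Gamma g m (x, y, i) (p, q, l)))).
under eq_bigr => l _ do under eq_bigr => p _ do under eq_bigr => q _ do rewrite Gdec.
rewrite sum3 GS_R1 GS_Sp1 GS_Sq1 sum_indc.
have -> : forall A B C D : int, 1 * A + B * (D * 2) + C * (2 * D) = A + (B + C) * (2 * D)
  by move=> *; ring.
rewrite sumfwd natrB; last by lia.
rewrite !natrM; ring.
Qed.

Lemma colsum (b : G * G * 'I_m) :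
  \sum_c ind (Gamma g m c b) = (2 * m * #|G| - 2)%N%:R.
Proof.
case: b => [[u v] j].
rewrite (eq_bigr (fun c => (fun p q l => ind (Gamma g m (p, q, l) (u, v, j)))
   c.1.1 c.1.2 c.2)); last by move=> [[p q] l].
rewrite (sumT (fun p q l => ind (Gamma g m (p, q, l) (u, v, j)))).
under eq_bigr => l _ do under eq_bigr => p _ do under eq_bigr => q _ do rewrite Gdec.
rewrite sum3 GS_R2 !GS_Spq sum_ind.
have -> : forall A B C D : int, 1 * A + B * D + C * D = A + (C + B) * D
  by move=> *; ring.
rewrite sumfwd natrB; last by lia.
rewrite !natrM; ring.
Qed.

Definition TT : finType := (G * G * 'I_m)%type.
Lemma sum_ev (F : TT -> int) :
  \sum_(k < #|TT|) F (enum_val k) = \sum_c F c.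
Proof. by rewrite -big_enum_val; apply: eq_bigl => c; rewrite inE. Qed.

Lemma AJ : adjmx (Gamma g m) *m Jmx _ = (2 * m * #|G| - 2)%N%:R *: Jmx _.
Proof.
apply/matrixP => a b; rewrite !mxE.
under eq_bigr => k _ do rewrite !mxE mulr1.
rewrite mulr1 -(rowsum (enum_val a)) -sum_ev.
by apply: eq_bigr.
Qed.

Lemma JA : Jmx _ *m adjmx (Gamma g m) = (2 * m * #|G| - 2)%N%:R *: Jmx _.
Proof.
apply/matrixP => a b; rewrite !mxE.
under eq_bigr => k _ do rewrite !mxE mul1r.
rewrite mulr1 -(colsum (enum_val b)) -sum_ev.
by apply: eq_bigr.
Qed.

Lemma AA : let A := adjmx (Gamma g m) in
  A *m A = ((2 * #|G| + 4 * m - 6)%N%:R : int)%:M + (#|G| + 4 * m - 6)%N%:R *: A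
    + (4 * m - 2)%N%:R *: (Jmx _ - 1%:M - A).
Proof.
move=> A; apply/matrixP => a b; rewrite !mxE.
under eq_bigr => k _ do rewrite !mxE.
rewrite -(inj_eq enum_val_inj).
have := count2 (enum_val a).1.1 (enum_val a).1.2 (enum_val b).1.1 (enum_val b).1.2
   (enum_val a).2 (enum_val b).2.
case: (enum_val a) => [[x y] i]; case: (enum_val b) => [[u v] j] /=.
rewrite -(sum_ev (fun c => ind (Gamma g m (x, y, i) c) * ind (Gamma g m c (u, v, j)))).
move=> ->.
by rewrite /ind mulr_natr.
Qed.

End Main.

Close Scope ring_scope.

Theorem mainTheorem2 (G : finGroupType) (g : G) (m : nat) :
  2 <= #|G| -> g != 1%g -> 3 <= m -> odd m ->
  is_dsrg (Gamma g m)
    (m * #|G| ^ 2) (2 * m * #|G| - 2) (2 * #|G| + 4 * m - 6)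
    (#|G| + 4 * m - 6) (4 * m - 2).
Proof.
move=> n2 g1 m3 modd.
split.
- by move=> [[x y] i]; rewrite /Gamma /= !eqxx (fwd_irr m3 modd) !andbF.
- by rewrite !card_prod card_ord -mulnn mulnC.
- by apply: AJ.
- by apply: JA.
- by apply: AA.
Qed.
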